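(* Let $\mathcal{U}\subset\mathbb{R}^d$ be a nonempty box $\{u:u_{\min}\le u\le u_{\max}\}$, let $L:\mathbb{R}^d\to\mathbb{R}$ be measurable, $u^*\in\mathcal{U}$, and let $\lambda^{\min},\lambda^{\max}>0$, $\eta\ge0$ be constants such that for all $u\in\mathcal{U}$ $$\lambda^{\min}|u-u^*|^2\le L(u)-L(u^* )\le\eta|u-u^*|+\lambda^{\max}|u-u^*|^2 .$$ Let $f$ be a probability measure on $\mathbb{R}^d$ supported in $\mathcal{U}$ with $u^*\in\operatorname{supp}(f)$, and fix $\alpha>0$. Then for every $\varepsilon>0$ and every $R_\varepsilon>0$ with $$R_\varepsilon\le\min\Big\{\varepsilon^2\frac{\lambda^{\min}}{8(\lambda^{\max}+\eta)},\,1\Big\},$$ it holds $$\big|m^\alpha_L[f]-u^*\big|\le\frac{\varepsilon}{2}+\frac{\exp\!\big(-\alpha\lambda^{\min}(\varepsilon/4)^2\big)}{f(B_{R_\varepsilon}(u^* ))}\,\mathrm{V}^*[f].$$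
   Context: For a probability measure $f$ on $\mathbb{R}^d$, $m^\alpha_L[f]:=\dfrac{\int u\,e^{-\alpha L(u)}f(du)}{\int e^{-\alpha L(u)}f(du)}$ and $\mathrm{V}^*[f]:=\int|u-u^*|\,f(du)$. $B_R(v)$ is the closed Euclidean ball of radius $R$ centered at $v$. In the paper, $L=L_n$ is the MPC loss, $u^*=u^*_{(n)}$, $\lambda^{\min},\lambda^{\max}$ are the extreme eigenvalues of $F_c^\top F_c+\nu I_d$ and $\eta=|\eta^{1,*}_{(n)}|+|\eta^{2,*}_{(n)}|$ is the sum of norms of the Lagrange multipliers. *)

(* Defs.v *)
(* R^d is modelled as d.-tuple R, which
   MathComp-Analysis equips with the product (= Borel) sigma-algebra. *)
From HB Require Import structures.
From mathcomp Require Import all_boot all_order all_algebra.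
From mathcomp Require Import all_classical all_reals all_analysis.
Set Implicit Arguments. Unset Strict Implicit. Unset Printing Implicit Defensive.
Import Order.TTheory GRing.Theory Num.Theory.
Local Open Scope classical_set_scope.
Local Open Scope ring_scope.

Definition eucl_dist (R : realType) (d : nat) (u v : d.-tuple R) : R :=
  Num.sqrt (\sum_(i < d) (tnth u i - tnth v i) ^+ 2).

Definition eucl_ball (R : realType) (d : nat) (v : d.-tuple R) (r : R) : set (d.-tuple R) :=
  [set u | eucl_dist u v <= r].

Definition ubox (R : realType) (d : nat) (umin umax : d.-tuple R) : set (d.-tuple R) :=
  [set u | forall i : 'I_d, tnth umin i <= tnth u i <= tnth umax i].

Definition consensus_point (R : realType) (d : nat)
    (f : probability (d.-tuple R) R) (L : d.-tuple R -> R) (alpha : R) : d.-tuple R :=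
  [tuple (Rintegral f setT (fun u => tnth u i * expR (- alpha * L u))
          / Rintegral f setT (fun u => expR (- alpha * L u))) | i < d].

Definition Vstar (R : realType) (d : nat)
    (f : probability (d.-tuple R) R) (ustar : d.-tuple R) : R :=
  Rintegral f setT (fun u => eucl_dist u ustar).

(* Main.v *)
Require Import Defs.
From HB Require Import structures.
From mathcomp Require Import all_boot all_order all_algebra.
From mathcomp Require Import all_classical all_reals all_analysis.
From mathcomp Require Import measurable_realfun ring lra.
Import Order.TTheory GRing.Theory Num.Theory.
Import numFieldNormedType.Exports.
Local Open Scope classical_set_scope.
Local Open Scope ring_scope.
Set Implicit Arguments. Unset Strict Implicit. Unset Printing Implicit Defensive.

Lemma measurable_dist (R : realType) (d : nat) (c : d.-tuple R) :
  measurable_fun setT (fun u : d.-tuple R => eucl_dist u c).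
Proof.
rewrite /eucl_dist.
apply: measurableT_comp; first exact: continuous_measurable_fun (@sqrt_continuous R).
apply: measurable_sum => i.
apply: measurable_funX.
apply: measurable_funB => //.
exact: measurable_tnth.
Qed.

Lemma CS (R : realType) (d : nat) (x y : 'I_d -> R) :
  \sum_i x i * y i <= Num.sqrt (\sum_i x i ^+ 2) * Num.sqrt (\sum_i y i ^+ 2).
Proof.
set s := Num.sqrt _; set t := Num.sqrt _.
have s0 : 0 <= s by exact: sqrtr_ge0.
have t0 : 0 <= t by exact: sqrtr_ge0.
have ss : s ^+ 2 = \sum_i x i ^+ 2 by rewrite sqr_sqrtr // sumr_ge0 // => i _; exact: sqr_ge0.
have tt : t ^+ 2 = \sum_i y i ^+ 2 by rewrite sqr_sqrtr // sumr_ge0 // => i _; exact: sqr_ge0.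
have [t00|tpos] := eqVneq t 0.
  have yi : forall i, y i = 0.
    move=> i; apply/eqP; rewrite -sqrf_eq0; apply/eqP.
    have := tt; rewrite t00 expr0n /= => /esym/eqP; rewrite psumr_eq0; last by move=> j _; exact: sqr_ge0.
    by move/allP => /(_ i (mem_index_enum _)) /implyP /(_ isT) /eqP.
  by rewrite big1 ?t00 ?mulr0 // => i _; rewrite yi mulr0.
have [s00|spos] := eqVneq s 0.
  have xi : forall i, x i = 0.
    move=> i; apply/eqP; rewrite -sqrf_eq0; apply/eqP.
    have := ss; rewrite s00 expr0n /= => /esym/eqP; rewrite psumr_eq0; last by move=> j _; exact: sqr_ge0.
    by move/allP => /(_ i (mem_index_enum _)) /implyP /(_ isT) /eqP.
  by rewrite big1 ?s00 ?mul0r // => i _; rewrite xi mul0r.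
have st : 0 < s * t by rewrite mulr_gt0 // lt0r ?spos ?tpos.
have H : 0 <= \sum_i (x i * t - y i * s) ^+ 2 by rewrite sumr_ge0 // => i _; exact: sqr_ge0.
have E : \sum_i (x i * t - y i * s) ^+ 2 = 2 * (s * t) * (s * t - \sum_i x i * y i).
  rewrite (eq_bigr (fun i => t ^+ 2 * x i ^+ 2 - (2 * (s * t)) * (x i * y i) + s ^+ 2 * y i ^+ 2)); last by move=> i _; ring.
  rewrite big_split /= sumrB -!mulr_sumr -ss -tt; ring.
rewrite E in H.
rewrite -subr_ge0.
by rewrite pmulr_rge0 in H => //; rewrite mulr_gt0.
Qed.
Lemma measurable_box (R : realType) (d : nat) (a b : d.-tuple R) :
  measurable (ubox a b).
Proof.
have -> : ubox a b = \bigcap_(i in [set: 'I_d])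
     (setT `&` ((fun u : d.-tuple R => tnth u i) @^-1` `[tnth a i, tnth b i])).
  apply/seteqP; split => u /=.
    by move=> H i _; split => //=; rewrite in_itv /= H.
  by move=> H i; have [_ /=] := H i I; rewrite in_itv.
apply: fin_bigcap_measurable; first exact: finite_finset.
by move=> i _; apply: measurable_tnth => //; exact: measurable_itv.
Qed.

Lemma RintB (R : realType) (d : nat) (umin umax : d.-tuple R)
  (f : probability (d.-tuple R) R) (g : d.-tuple R -> R) :
  f (~` ubox umin umax) = 0%E -> measurable_fun setT g ->
  Rintegral f setT g = Rintegral f (ubox umin umax) g.
Proof.
move=> f0 mg; have mB := measurable_box umin umax.
rewrite [in RHS]Rintegral_mkcond /Rintegral; congr fine.
apply: (@ae_eq_integral _ _ _ f setT) => //.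
- exact/measurable_EFinP.
- apply/measurable_EFinP; apply/(measurable_restrict _ mB measurableT).
  exact: measurable_funS mg.
- exists (~` ubox umin umax); split => //; first exact: measurableC.
  move=> x /= H Bx; apply: H => _.
  by rewrite patchT // inE.
Qed.

Lemma bnd_of (T : Type) (R : realType) (A : set T) (h : T -> R) (M : R) :
  (forall x, A x -> `|h x| <= M) -> [bounded h x | x in A].
Proof.
move=> HM; exists M; split; first exact: num_real.
by move=> y My x Ax; apply: le_trans (HM x Ax) _; exact: ltW.
Qed.

Lemma intB (R : realType) (d : nat) (umin umax : d.-tuple R)
  (f : probability (d.-tuple R) R) (h : d.-tuple R -> R) (M : R) :
  measurable_fun setT h -> (forall u, ubox umin umax u -> `|h u| <= M) ->
  f.-integrable (ubox umin umax) (EFin \o h).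
Proof.
move=> mh HM; apply: measurable_bounded_integrable.
- exact: measurable_box.
- by apply: (le_lt_trans (probability_le1 f (measurable_box _ _))); exact: ltey.
- exact: measurable_funS mh.
- exact: bnd_of HM.
Qed.
Lemma Rint_sum (dd : measure_display) (T : measurableType dd) (R : realType)
  (mu : {measure set T -> \bar R}) (A : set T) (I : Type) (s : seq I)
  (h : I -> T -> R) :
  measurable A -> (forall i, mu.-integrable A (EFin \o h i)) ->
  mu.-integrable A (EFin \o (fun x => \sum_(i <- s) h i x)) /\
  Rintegral mu A (fun x => \sum_(i <- s) h i x) = \sum_(i <- s) Rintegral mu A (h i).
Proof.
move=> mA ih; elim: s => [|a s [IHi IHe]].
  split.
    by apply: (eq_integrable mA _ _ _ (integrable0 mu A)) => x _; rewrite /= big_nil.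
  under eq_Rintegral do rewrite big_nil.
  by rewrite big_nil Rintegral_cst // mul0r.
split.
  apply: (eq_integrable mA _ _ _ (integrableD mA (ih a) IHi)) => x _.
  by rewrite /= big_cons EFinD.
under eq_Rintegral do rewrite big_cons.
by rewrite big_cons RintegralD // IHe.
Qed.

Unset Implicit Arguments.

Theorem mainTheorem2 (R : realType) (d : nat) (umin umax : d.-tuple R)
  (L : d.-tuple R -> R) (ustar : d.-tuple R) (lmin lmax eta alpha : R)
  (f : probability (d.-tuple R) R) :
  (forall i : 'I_d, tnth umin i <= tnth umax i) ->
  measurable_fun setT L ->
  ubox umin umax ustar ->
  0 < lmin -> 0 < lmax -> 0 <= eta ->
  (forall u, ubox umin umax u ->
     (lmin * eucl_dist u ustar ^+ 2 <= L u - L ustar)%R /\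
     (L u - L ustar <= eta * eucl_dist u ustar + lmax * eucl_dist u ustar ^+ 2)%R) ->
  f (~` ubox umin umax) = 0%E ->
  (forall r : R, 0 < r -> (0 < f (eucl_ball ustar r))%E) ->
  0 < alpha ->
  forall eps Reps : R, 0 < eps -> 0 < Reps ->
  Reps <= Num.min (eps ^+ 2 * lmin / (8 * (lmax + eta))) 1 ->
  eucl_dist (consensus_point f L alpha) ustar
    <= eps / 2 + expR (- alpha * lmin * (eps / 4) ^+ 2)
                 / fine (f (eucl_ball ustar Reps)) * Vstar f ustar.
Proof.
move=> hbox mL uB lmin0 lmax0 eta0 HL f0 fpos alpha0 eps Reps eps0 R0 Rle.
pose B := ubox umin umax.
have mB : measurable B := measurable_box umin umax.
pose D := fun u : d.-tuple R => eucl_dist u ustar.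
have mD : measurable_fun setT D := measurable_dist ustar.
have D0 : forall u, 0 <= D u by move=> u; exact: sqrtr_ge0.
pose E := fun u : d.-tuple R => expR (- alpha * L u).
have mE : measurable_fun setT E.
  apply: measurableT_comp; first exact: measurable_expR.
  exact: (@measurable_funM _ _ _ setT (fun=> - alpha) L (measurable_cst _) mL).
have E0 : forall u, 0 < E u by move=> u; exact: expR_gt0.
pose e0 := expR (- alpha * L ustar).
have e00 : 0 < e0 by exact: expR_gt0.
have Ebnd : forall u, B u -> E u <= e0 * expR (- alpha * lmin * D u ^+ 2).
  move=> u Bu; have [h1 _] := HL u Bu.
  rewrite /E /e0 -expRD ler_expR.
  have : alpha * (lmin * D u ^+ 2) <= alpha * (L u - L ustar) by rewrite ler_pM2l.
  rewrite /D; lra.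
have Ele : forall u, B u -> E u <= e0.
  move=> u Bu; have [h1 _] := HL u Bu.
  rewrite /E /e0 ler_expR.
  have h2 : 0 <= lmin * D u ^+ 2 by rewrite mulr_ge0 // ?sqr_ge0 // ltW.
  have : 0 <= alpha * (L u - L ustar).
    by apply: mulr_ge0; [exact: ltW | rewrite /D /= in h2; lra].
  lra.
have Elow : forall u, B u -> D u <= Reps ->
    e0 * expR (- alpha * (eta * Reps + lmax * Reps ^+ 2)) <= E u.
  move=> u Bu DR; have [_ h2] := HL u Bu.
  rewrite /E /e0 -expRD ler_expR.
  have h3 : eta * D u <= eta * Reps by rewrite ler_wpM2l.
  have h4 : lmax * D u ^+ 2 <= lmax * Reps ^+ 2.
    by apply: ler_wpM2l; [exact: ltW|]; rewrite !expr2; apply: ler_pM.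
  have : alpha * (L u - L ustar) <= alpha * (eta * Reps + lmax * Reps ^+ 2).
    by rewrite ler_pM2l //; rewrite /D in h3 h4; lra.
  lra.
pose MB := fun i : 'I_d => `|tnth umin i| + `|tnth umax i|.
have MB0 : forall i, 0 <= MB i by move=> i; rewrite addr_ge0.
have uBnd : forall u, B u -> forall i, `|tnth u i| <= MB i.
  move=> u Bu i; have /andP[h1 h2] := Bu i.
  have h3 := ler_norm (tnth umax i); have h4 := ler_norm (- tnth umin i).
  rewrite normrN in h4.
  have h5 := normr_ge0 (tnth umin i); have h6 := normr_ge0 (tnth umax i).
  rewrite ler_norml /MB; apply/andP; split; lra.
have diBnd : forall u, B u -> forall i, `|tnth u i - tnth ustar i| <= 2 * MB i.
  move=> u Bu i; apply: le_trans (ler_normB _ _) _.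
  have := uBnd u Bu i; have := uBnd ustar uB i; lra.
pose MD := 1 + \sum_i (2 * MB i) ^+ 2.
have Dbnd : forall u, B u -> D u <= MD.
  move=> u Bu; rewrite /D /eucl_dist.
  set s := \sum_i _.
  have s0 : 0 <= s by rewrite /s sumr_ge0 // => i _; exact: sqr_ge0.
  have hs : s <= \sum_i (2 * MB i) ^+ 2.
    rewrite /s; apply: ler_sum => i _.
    rewrite -real_normK ?num_real // !expr2.
    by apply: ler_pM; rewrite ?normr_ge0 ?diBnd.
  apply: le_trans (_ : Num.sqrt ((1 + s) ^+ 2) <= _).
    rewrite ler_sqrt ?sqr_ge0 //; nra.
  rewrite sqrtr_sqr ger0_norm /MD; lra.
have iE : f.-integrable B (EFin \o E).
  apply: (@intB _ _ umin umax f _ (e0)); [exact: mE | move=> v Bv; rewrite (ger0_norm (ltW (E0 v))); exact: Ele].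
have iuE : forall i, f.-integrable B (EFin \o (fun u => tnth u i * E u)).
  move=> i; apply: (@intB _ _ umin umax f _ (MB i * e0)).
    by apply: measurable_funM => //; exact: measurable_tnth.
  move=> u Bu; rewrite normrM (ger0_norm (ltW (E0 u))).
  by apply: ler_pM => //; [exact: ltW| exact: uBnd| exact: Ele].
have idE : forall i, f.-integrable B
    (EFin \o (fun u => (tnth u i - tnth ustar i) * E u)).
  move=> i; apply: (@intB _ _ umin umax f _ (2 * MB i * e0)).
    apply: measurable_funM => //; apply: measurable_funB => //.
    exact: measurable_tnth.
  move=> u Bu; rewrite normrM (ger0_norm (ltW (E0 u))).
  by apply: ler_pM => //; [exact: ltW| exact: diBnd| exact: Ele].
have iD : f.-integrable B (EFin \o D).
  apply: (@intB _ _ umin umax f _ (MD)); [exact: mD | move=> v Bv; rewrite (ger0_norm (D0 v)); exact: Dbnd].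
have iDE : f.-integrable B (EFin \o (fun u => D u * E u)).
  apply: (@intB _ _ umin umax f _ (MD * e0)); first exact: measurable_funM.
  move=> u Bu; rewrite normrM (ger0_norm (ltW (E0 u))) (ger0_norm (D0 u)).
  by apply: ler_pM => //; [exact: ltW| exact: Dbnd| exact: Ele].
pose Z := Rintegral f B E.
have hZ : Rintegral f setT (fun u => expR (- alpha * L u)) = Z := RintB f0 mE.
have hV : Vstar f ustar = Rintegral f B D := RintB f0 mD.
have V0 : 0 <= Rintegral f B D by apply: Rintegral_ge0 => u _; exact: D0.
pose ball := eucl_ball ustar Reps.
have mBall : measurable ball.
  by have := measurable_fun_le measurableT mD (measurable_cst Reps); rewrite setTI.
have finA : forall A, measurable A -> f A \is a fin_num.
  move=> A mA; rewrite ge0_fin_numE ?measure_ge0 //.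
  by apply: le_lt_trans (probability_le1 f mA) _; exact: ltey.
pose F := fine (f ball).
have Fpos : 0 < F.
  rewrite /F fine_gt0 // (fpos _ R0) /=.
  by apply: le_lt_trans (probability_le1 f mBall) _; exact: ltey.
have mBI : measurable (B `&` ball) by exact: measurableI.
have fBI : (f ball <= f (B `&` ball))%E.
  apply: (@le_trans _ _ (f ((B `&` ball) `|` ~` B))).
    apply: le_measure; rewrite ?inE.
    - exact: mBall.
    - by apply: measurableU => //; exact: measurableC.
    - by move=> u bu; case: (pselect (B u)) => Bu; [left|right].
  apply: le_trans (measureU2 f mBI (measurableC mB)) _.
  have -> : (f (B `&` ball) + f (~` B) = f (B `&` ball) + 0)%E.
    by congr (_ + _)%E; exact: f0.
  by rewrite adde0.
have FBI : F <= fine (f (B `&` ball)) by rewrite /F fine_le // ?finA.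
pose K := e0 * expR (- alpha * (eta * Reps + lmax * Reps ^+ 2)).
have K0 : 0 < K by rewrite mulr_gt0 // expR_gt0.
have ZKF : K * F <= Z.
  apply: (@le_trans _ _ (K * fine (f (B `&` ball)))).
    by rewrite ler_wpM2l // ltW.
  rewrite -Rintegral_cst // Rintegral_mkcondr /Z.
  apply: le_Rintegral => //.
  - apply: (@intB _ _ umin umax f _ K).
      apply/(measurable_restrict _ mBall measurableT).
      exact: measurable_cst.
    move=> v Bv; rewrite /patch; case: ifPn => _; rewrite ?normr0 ?(ger0_norm (ltW K0)) //; exact: ltW.
  - move=> v Bv; rewrite /patch; case: ifPn => H.
      by apply: Elow => //; move: H; rewrite inE.
    exact: (ltW (E0 v)).
have Zpos : 0 < Z by apply: lt_le_trans ZKF; rewrite mulr_gt0.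
pose m := consensus_point f L alpha.
pose x := fun i : 'I_d => tnth m i - tnth ustar i.
have Zn0 : Z != 0 by rewrite gt_eqF.
have hx : forall i, Z * x i = Rintegral f B (fun u => (tnth u i - tnth ustar i) * E u).
  move=> i.
  have mi : measurable_fun setT (fun u : d.-tuple R => tnth u i * expR (- alpha * L u)).
    by apply: measurable_funM => //; exact: measurable_tnth.
  have h1 : Rintegral f setT (fun u => tnth u i * expR (- alpha * L u)) =
     Rintegral f B (fun u => tnth u i * E u) := RintB f0 mi.
  rewrite /x /m /consensus_point tnth_mktuple h1 hZ.
  have -> : Rintegral f B (fun u => (tnth u i - tnth ustar i) * E u) =
      Rintegral f B (fun u => tnth u i * E u - tnth ustar i * E u).
    by apply: eq_Rintegral => u _; rewrite mulrBl.
  rewrite RintegralB //; last first.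
    apply: (eq_integrable mB _ _ _ (integrableZl mB (tnth ustar i) iE)).
    by move=> u _ /=; rewrite EFinM.
  rewrite RintegralZl //.
  have -> : Rintegral f B (fun x0 => E x0) = Z by [].
  by rewrite mulrBr mulrCA mulfV // mulr1 [Z * _]mulrC.
pose nx := Num.sqrt (\sum_i x i ^+ 2).
have nx0 : 0 <= nx := sqrtr_ge0 _.
pose y := fun u : d.-tuple R => \sum_i x i * (tnth u i - tnth ustar i).
have ybnd : forall u, y u <= nx * D u.
  by move=> u; exact: (CS x (fun i => tnth u i - tnth ustar i)).
pose h := fun i (u : d.-tuple R) => x i * ((tnth u i - tnth ustar i) * E u).
have ih : forall i, f.-integrable B (EFin \o h i).
  move=> i; apply: (eq_integrable mB _ _ _ (integrableZl mB (x i) (idE i))).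
  by move=> u _ /=; rewrite EFinM.
have [isum esum] := Rint_sum (index_enum 'I_d) mB ih.
have eyh : forall u, y u * E u = \sum_i h i u.
  by move=> u; rewrite /y mulr_suml; apply: eq_bigr => i _; rewrite /h mulrA.
have iyE : f.-integrable B (EFin \o (fun u => y u * E u)).
  by apply: (eq_integrable mB _ _ _ isum) => u _ /=; rewrite eyh.
have hsum : Z * nx ^+ 2 = Rintegral f B (fun u => y u * E u).
  have -> : Rintegral f B (fun u => y u * E u) = Rintegral f B (fun u => \sum_i h i u).
    by apply: eq_Rintegral => u _; rewrite eyh.
  rewrite esum sqr_sqrtr; last by rewrite sumr_ge0 // => i _; exact: sqr_ge0.
  rewrite mulr_sumr; apply: eq_bigr => i _.
  rewrite /h RintegralZl // -hx.
  by rewrite expr2 mulrCA.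
have hle : Rintegral f B (fun u => y u * E u) <= nx * Rintegral f B (fun u => D u * E u).
  rewrite -(RintegralZl nx mB iDE); apply: le_Rintegral => //.
    apply: (eq_integrable mB _ _ _ (integrableZl mB nx iDE)).
    by move=> u _ /=; rewrite EFinM.
  by move=> u _; rewrite mulrA ler_pM2r //; exact: ybnd.
pose r := eps / 2.
pose c' := e0 * expR (- alpha * lmin * r ^+ 2).
have hDE : Rintegral f B (fun u => D u * E u) <= r * Z + c' * Rintegral f B D.
  have -> : r * Z + c' * Rintegral f B D =
      Rintegral f B (fun u => r * E u + c' * D u).
    rewrite RintegralD //.
    - by rewrite RintegralZl // RintegralZl.
    - apply: (eq_integrable mB _ _ _ (integrableZl mB r iE)).
      by move=> u _ /=; rewrite EFinM.
    - apply: (eq_integrable mB _ _ _ (integrableZl mB c' iD)).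
      by move=> u _ /=; rewrite EFinM.
  apply: le_Rintegral => //.
    apply: (eq_integrable mB _ _ _ (integrableD mB (integrableZl mB r iE) (integrableZl mB c' iD))).
    by move=> u _ /=; rewrite EFinD !EFinM.
  move=> v Bv.
  have r0 : 0 < r by rewrite divr_gt0.
  have c'0 : 0 < c' by rewrite mulr_gt0 // expR_gt0.
  case: (lerP (D v) r) => hr.
    have : D v * E v <= r * E v by rewrite ler_pM2r.
    have : 0 <= c' * D v by rewrite mulr_ge0 // ltW.
    lra.
  have hE : E v <= c'.
    apply: le_trans (Ebnd v Bv) _; rewrite ler_pM2l // ler_expR.
    have : r ^+ 2 <= D v ^+ 2 by rewrite !expr2; apply: ler_pM => //; exact: ltW.
    move=> h2; have := ler_wpM2l (ltW (mulr_gt0 alpha0 lmin0)) h2.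
    lra.
  have : D v * E v <= D v * c' by rewrite ler_wpM2l.
  have : 0 <= r * E v by rewrite mulr_ge0 // ltW.
  lra.
change (nx <= eps / 2 + expR (- alpha * lmin * (eps / 4) ^+ 2) / F * Vstar f ustar).
rewrite hV.
set V := Rintegral f B D.
set c := expR (- alpha * lmin * (eps / 4) ^+ 2).
have c0 : 0 < c by exact: expR_gt0.
have lpe : 0 < lmax + eta by lra.
move: Rle; rewrite le_min => /andP[Rle2 Rle1].
have hR1 : (lmax + eta) * Reps <= eps ^+ 2 * lmin / 8.
  have : (lmax + eta) * Reps <= (lmax + eta) * (eps ^+ 2 * lmin / (8 * (lmax + eta))).
    by apply: ler_wpM2l => //; exact: ltW.
  have -> : (lmax + eta) * (eps ^+ 2 * lmin / (8 * (lmax + eta))) = eps ^+ 2 * lmin / 8.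
    by field; rewrite gt_eqF.
  by [].
have hR2 : Reps ^+ 2 <= Reps.
  rewrite expr2; apply: (@le_trans _ _ (Reps * 1)); last by rewrite mulr1.
  by apply: ler_wpM2l => //; exact: ltW.
have hR3 : lmax * Reps ^+ 2 <= lmax * Reps by apply: ler_wpM2l => //; exact: ltW.
have el : 0 <= eps ^+ 2 * lmin by rewrite mulr_ge0 // ?sqr_ge0 // ltW.
have hs' : eta * Reps + lmax * Reps ^+ 2 <= 3 / 16 * (eps ^+ 2 * lmin) by lra.
have key1 : c' <= c * K.
  have -> : c * K = e0 * (c * expR (- alpha * (eta * Reps + lmax * Reps ^+ 2))).
    by rewrite /K; ring.
  rewrite /c' /c ler_pM2l // -expRD ler_expR.
  have : alpha * (eta * Reps + lmax * Reps ^+ 2) <= alpha * (3 / 16 * (eps ^+ 2 * lmin)).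
    by apply: ler_wpM2l => //; exact: ltW.
  rewrite /r; lra.
have key : c' * V <= Z * (c / F * V).
  have cF : c' * F <= c * Z.
    apply: (@le_trans _ _ (c * K * F)); first by rewrite ler_wpM2r // ltW.
    by rewrite -mulrA ler_wpM2l // ltW.
  have : c' * F / F * V <= c * Z / F * V.
    by apply: ler_wpM2r => //; apply: ler_wpM2r => //; rewrite invr_ge0 ltW.
  have -> : c' * F / F * V = c' * V by rewrite mulfK // gt_eqF.
  have -> : c * Z / F * V = Z * (c / F * V) by ring.
  by [].
have [nxz|nxp] := eqVneq nx 0.
  rewrite nxz; have : 0 <= c / F * V by rewrite mulr_ge0 // divr_ge0 // ltW.
  lra.
have nxpos : 0 < nx by rewrite lt0r nxp.
have h1 : Z * nx ^+ 2 <= nx * (r * Z + c' * V).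
  rewrite hsum; apply: le_trans hle _; exact: ler_wpM2l.
have h2 : Z * nx <= r * Z + c' * V.
  rewrite -(ler_pM2l nxpos); apply: le_trans h1; by rewrite expr2 mulrCA.
rewrite -(ler_pM2l Zpos) mulrDr.
rewrite /r in h2; lra.
Qed.
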